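(* Let $(R,\mathfrak m,k)$ be a one-dimensional analytically irreducible local domain with canonical map $k\to\overline R/\mathfrak n$ an isomorphism, with $v,a_i,n,I_i,\mathcal T(R),\mathcal I(R)$ as in the context. Let $n\ge 4$ and assume there exists $1\le i\le n-3$ such that $I_iI_{i+2}\ne qI_{i+2}$ for some (equivalently, any) $q\in R$ with $v(q)=a_i$. Then: (1) $\mathcal I(R)\subsetneq\mathcal T(R)$; (2) if $k$ is infinite, then $\mathcal T(R)$ is an infinite set.
   Context: $\overline R$ is the integral closure of $R$ in $Q(R)$, assumed finitely generated over $R$ and local with maximal ideal $\mathfrak n$; $v$ is the normalized valuation of $\overline R$; $v(R)=\{a_0=0<a_1<\cdots\}$; $n$ is the smallest integer with $a_{n+j}=a_n+j$ for all $j\ge 0$; $I_j=\{r\in R\mid v(r)\ge a_j\}$ for $0\le j\le n$; $\mathcal I(R)=\{I_0,\dots,I_n\}$. $\mathcal T(R)$ is the set of nonzero trace ideals of $R$ (ideals of the form $\sum_{f\in\mathrm{Hom}_R(M,R)}\mathrm{Im}f$). *)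

(* Defs.v *)
From HB Require Import structures.
From mathcomp Require Import all_boot all_order all_algebra.
Set Implicit Arguments. Unset Strict Implicit. Unset Printing Implicit Defensive.
Import Order.TTheory GRing.Theory Num.Theory.
Local Open Scope ring_scope.

Section Ideals.
Variable A : comUnitRingType.

Definition is_ideal (I : A -> Prop) : Prop :=
  [/\ I 0, (forall x y, I x -> I y -> I (x + y)) & (forall a x, I x -> I (a * x))].

Definition same_ideal (I J : A -> Prop) : Prop := forall x, I x <-> J x.
Definition nonzero_ideal (I : A -> Prop) : Prop := exists x, I x /\ x != 0.

Definition ideal_gen (s : seq A) (x : A) : Prop :=
  exists c : 'I_(size s) -> A, x = \sum_(i < size s) c i * s`_i.

Definition is_noetherian : Prop :=
  forall I, is_ideal I -> exists s : seq A, same_ideal I (ideal_gen s).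

Definition is_prime_ideal (P : A -> Prop) : Prop :=
  [/\ is_ideal P, ~ P 1 & forall a b, P (a * b) -> P a \/ P b].

Definition is_maximal_ideal (M : A -> Prop) : Prop :=
  [/\ is_ideal M, ~ M 1 &
     forall J, is_ideal J -> (forall x, M x -> J x) -> J 1 \/ same_ideal J M].

Definition krull_dim_one : Prop :=
  (exists P, is_prime_ideal P /\ nonzero_ideal P) /\
  (forall P, is_prime_ideal P -> nonzero_ideal P -> is_maximal_ideal P).

Definition nonunits (x : A) : Prop := ~ (x \is a GRing.unit).

Definition is_local : Prop := is_ideal nonunits.

(* residue field k = A / m is infinite *)
Definition infinite_residue_field : Prop :=
  forall s : seq A, exists r, forall x, x \in s -> ~ nonunits (r - x).

Definition ideal_mul (I J : A -> Prop) (x : A) : Prop :=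
  exists k (f g : 'I_k -> A), (forall i, I (f i)) /\ (forall i, J (g i)) /\
    x = \sum_(i < k) f i * g i.

Definition scale_ideal (q : A) (J : A -> Prop) (x : A) : Prop :=
  exists y, J y /\ x = q * y.

Definition is_hom (M : lmodType A) (f : M -> A) : Prop :=
  forall (c : A) (x y : M), f (c *: x + y) = c * f x + f y.

Definition trace_ideal (M : lmodType A) (x : A) : Prop :=
  exists k (f : 'I_k -> M -> A) (m : 'I_k -> M),
    (forall i, is_hom (f i)) /\ x = \sum_(i < k) f i (m i).

Definition is_trace_ideal (I : A -> Prop) : Prop :=
  exists M : lmodType A, same_ideal I (trace_ideal M).

Definition in_TR (I : A -> Prop) : Prop := is_trace_ideal I /\ nonzero_ideal I.

End Ideals.

Section Closure.
Variables (R : idomainType) (K : fieldType) (iota : {rmorphism R -> K}).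

Definition is_fraction_field : Prop :=
  injective iota /\
  forall x : K, exists a b : R, b != 0 /\ x = iota a / iota b.

Definition Rbar (x : K) : Prop :=
  exists p : {poly R}, p \is monic /\ root (map_poly iota p) x.

Definition Rbar_finite : Prop :=
  exists s : seq K, (forall i, (i < size s)%N -> Rbar s`_i) /\
    forall x, Rbar x ->
      exists c : 'I_(size s) -> R, x = \sum_(i < size s) iota (c i) * s`_i.

Definition Rbar_nonunit (x : K) : Prop := Rbar x /\ (x = 0 \/ ~ Rbar x^-1).

Definition Rbar_local : Prop :=
  [/\ Rbar_nonunit 0, ~ Rbar_nonunit 1,
      (forall x y, Rbar_nonunit x -> Rbar_nonunit y -> Rbar_nonunit (x + y)) &
      (forall a x, Rbar a -> Rbar_nonunit x -> Rbar_nonunit (a * x))].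

(* canonical map k = R/m -> Rbar/n is an isomorphism *)
Definition residue_iso : Prop :=
  (forall r : R, Rbar_nonunit (iota r) -> nonunits r) /\
  (forall x, Rbar x -> exists r : R, Rbar_nonunit (x - iota r)).

Definition normalized_valuation_of_Rbar (v : K -> int) : Prop :=
  [/\ (forall x y, x != 0 -> y != 0 -> v (x * y) = v x + v y),
      (forall x y, x != 0 -> y != 0 -> x + y != 0 -> Num.min (v x) (v y) <= v (x + y)),
      (exists t, t != 0 /\ v t = 1) &
      (forall x, x != 0 -> (Rbar x <-> 0 <= v x))].

Definition enumerates_value_semigroup (v : K -> int) (a : nat -> nat) : Prop :=
  [/\ (forall j, (a j < a j.+1)%N),
      (forall j, exists r : R, r != 0 /\ v (iota r) = (a j)%:Z) &
      (forall r : R, r != 0 -> exists j, v (iota r) = (a j)%:Z)].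

Definition conductor_index (a : nat -> nat) (n : nat) : Prop :=
  (forall j, a (n + j) = a n + j)%N /\
  (forall m, (forall j, a (m + j) = a m + j)%N -> (n <= m)%N).

Definition Ival (v : K -> int) (a : nat -> nat) (j : nat) (r : R) : Prop :=
  r = 0 \/ (a j)%:Z <= v (iota r).

End Closure.

(* Main.v *)
Require Import Defs.
From HB Require Import structures.
From mathcomp Require Import all_boot all_order all_algebra.
From mathcomp Require Import zify ring boolp.
Set Implicit Arguments. Unset Strict Implicit. Unset Printing Implicit Defensive.
Import Order.TTheory GRing.Theory Num.Theory.
Local Open Scope ring_scope.

Section SubMod.
Variables (R : comUnitRingType) (J : R -> Prop).
Hypothesis J0 : J 0.
Hypothesis JD : forall x y, J x -> J y -> J (x + y).
Hypothesis JM : forall a x, J x -> J (a * x).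

Definition Jb : pred R := fun x => `[< J x >].
Definition JT := {x : R | Jb x}.
HB.instance Definition _ := [isSub for (@sval R Jb) : JT -> R].
HB.instance Definition _ := [Choice of JT by <:].

Lemma JbP x : Jb x <-> J x.
Proof. by rewrite /Jb; split => /asboolP. Qed.

Lemma JN x : J x -> J (- x).
Proof. by move=> Jx; rewrite -mulN1r; apply: JM. Qed.

Definition jzero : JT := exist _ 0 (introT (asboolP _) J0).
Definition jadd (x y : JT) : JT := exist _ (val x + val y)
  (introT (asboolP _) (JD (proj1 (JbP _) (valP x)) (proj1 (JbP _) (valP y)))).
Definition jopp (x : JT) : JT := exist _ (- val x)
  (introT (asboolP _) (JN (proj1 (JbP _) (valP x)))).
Definition jscale (c : R) (x : JT) : JT := exist _ (c * val x)
  (introT (asboolP _) (JM c (proj1 (JbP _) (valP x)))).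

Lemma jaddA : associative jadd. Proof. by move=> x y z; apply: val_inj; rewrite /= addrA. Qed.
Lemma jaddC : commutative jadd. Proof. by move=> x y; apply: val_inj; rewrite /= addrC. Qed.
Lemma jadd0 : left_id jzero jadd. Proof. by move=> x; apply: val_inj; rewrite /= add0r. Qed.
Lemma jaddN : left_inverse jzero jopp jadd. Proof. by move=> x; apply: val_inj; rewrite /= addNr. Qed.
HB.instance Definition _ := GRing.isZmodule.Build JT jaddA jaddC jadd0 jaddN.
Lemma jscaleA a b v : jscale a (jscale b v) = jscale (a * b) v.
Proof. by apply: val_inj; rewrite /= mulrA. Qed.
Lemma jscale1 : left_id 1 jscale. Proof. by move=> x; apply: val_inj; rewrite /= mul1r. Qed.
Lemma jscaleDr : right_distributive jscale +%R.
Proof. by move=> a x y; apply: val_inj; rewrite /= mulrDr. Qed.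
Lemma jscaleDl v : {morph jscale^~ v : a b / a + b}.
Proof. by move=> a b; apply: val_inj; rewrite /= mulrDl. Qed.
HB.instance Definition _ := GRing.Zmodule_isLmodule.Build R JT jscaleA jscale1 jscaleDr jscaleDl.

Definition JM_lmod : lmodType R := JT.
Lemma JT_val_scale (c : R) (x : JM_lmod) : val (c *: x) = c * val x. Proof. by []. Qed.
Lemma JT_val_add (x y : JM_lmod) : val (x + y) = val x + val y. Proof. by []. Qed.
Definition jmk x (Jx : J x) : JM_lmod := exist _ x (introT (asboolP _) Jx).
End SubMod.

Lemma trace_of_ideal (R : idomainType) (J : R -> Prop) (HJ : is_ideal J) q0 :
  J q0 -> q0 != 0 ->
  (forall b, (forall y, J y -> exists r, q0 * r = b * y) ->
     forall y r, J y -> q0 * r = b * y -> J r) ->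
  is_trace_ideal J.
Proof.
case: HJ => J0 JD JMu Jq0 q00 TC.
exists (JM_lmod J0 JD JMu) => x; split.
  move=> Jx; exists 1%N, (fun _ m => val m), (fun _ => jmk J0 JD JMu Jx); split.
    by move=> i c m1 m2.
  by rewrite big_ord1.
move=> [k [f [m [Hf ->]]]].
apply: (big_ind J) => // i _.
set fi := f i.
have Hfi : is_hom fi := Hf i.
have f0 : fi 0 = 0.
  have := Hfi 1 0 0; rewrite scale1r addr0 mul1r => H.
  by have := congr1 (fun z => z - fi 0) H; rewrite /= subrr addrK.
have fZ : forall c x, fi (c *: x) = c * fi x.
  by move=> c y; have := Hfi c y 0; rewrite !addr0 f0 addr0.
set b := fi (jmk J0 JD JMu Jq0).
have key : forall y (Jy : J y), q0 * fi (jmk J0 JD JMu Jy) = b * y.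
  move=> y Jy; rewrite -fZ.
  have -> : q0 *: jmk J0 JD JMu Jy = y *: jmk J0 JD JMu Jq0 by apply: val_inj; rewrite /= mulrC.
  by rewrite fZ mulrC.
have Jm : J (val (m i)) by apply/(JbP J); exact: valP.
have em : m i = jmk J0 JD JMu Jm by apply: val_inj.
apply: (TC b _ (val (m i))) => //.
  by move=> y Jy; exists (fi (jmk J0 JD JMu Jy)); apply: key.
by rewrite /fi em key.
Qed.

Lemma max_nat (P : nat -> Prop) (N i0 : nat) : P i0 -> (forall i, P i -> (i <= N)%N) ->
  exists i, P i /\ forall i', (i < i')%N -> ~ P i'.
Proof.
move=> Pi0 bnd.
suff H : forall k i, P i -> (N - i <= k)%N -> exists i, P i /\ forall i', (i < i')%N -> ~ P i'.
  exact: (H (N - i0)%N i0 Pi0 (leqnn _)).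
elim => [|k IH] i Pi hk.
  exists i; split => // i' ii' Pi'; have := bnd _ Pi'; have := bnd _ Pi; lia.
case: (pselect (exists i', (i < i')%N /\ P i')) => [[i' [ii' Pi']]|nx].
  apply: (IH i' Pi'); have := bnd _ Pi'; lia.
by exists i; split => // i' ii' Pi'; apply: nx; exists i'.
Qed.

Lemma ltz_add1 (x y : int) : 1 <= y -> x < x + y.
Proof. lia. Qed.

Section Main.
Variables (R : idomainType) (K : fieldType) (iota : {rmorphism R -> K}) (v : K -> int) (a : nat -> nat) (n : nat).
Hypothesis Hinj : injective iota.
Hypothesis Hv : normalized_valuation_of_Rbar iota v.
Hypothesis Ha : enumerates_value_semigroup iota v a.
Hypothesis Hn : conductor_index a n.
Hypothesis Hn4 : (4 <= n)%N.
Hypothesis Hres : residue_iso iota.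
Hypothesis Hfin : Rbar_finite iota.
Hypothesis Hfrac : is_fraction_field iota.

Lemma vM x y : x != 0 -> y != 0 -> v (x * y) = v x + v y.
Proof. by case: Hv => H _ _ _; apply: H. Qed.

Lemma v1 : v 1 = 0.
Proof. have H : v 1 = v 1 + v 1 by rewrite -vM ?oner_neq0 // mulr1. lia. Qed.

Lemma vV x : x != 0 -> v x^-1 = - v x.
Proof.
move=> x0; have H : v 1 = v x + v x^-1 by rewrite -vM ?invr_neq0 // mulfV.
rewrite v1 in H; lia.
Qed.

Lemma vN1 : v (-1) = 0.
Proof.
have n1 : (-1 : K) != 0 by rewrite oppr_eq0 oner_neq0.
have H : v 1 = v (-1) + v (-1) by rewrite -vM // mulrNN mulr1.
rewrite v1 in H; lia.
Qed.

Lemma vN x : v (- x) = v x.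
Proof.
have [->|x0] := eqVneq x 0; first by rewrite oppr0.
have n1 : (-1 : K) != 0 by rewrite oppr_eq0 oner_neq0.
by rewrite -mulN1r vM // vN1 add0r.
Qed.

Lemma vD x y : x != 0 -> y != 0 -> x + y != 0 -> Num.min (v x) (v y) <= v (x + y).
Proof. by case: Hv => _ H _ _; apply: H. Qed.

Lemma vD_ge x y (N : int) : x != 0 -> y != 0 -> x + y != 0 -> N <= v x -> N <= v y -> N <= v (x + y).
Proof.
move=> x0 y0 s0 h1 h2; apply: le_trans (vD x0 y0 s0).
by rewrite le_min h1 h2.
Qed.

Lemma v_strict x y : x != 0 -> (y = 0 \/ (y != 0 /\ v x < v y)) -> x + y != 0 /\ v (x + y) = v x.
Proof.
move=> x0 [->|[y0 lt]]; first by rewrite addr0.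
have s0 : x + y != 0.
  apply/negP => /eqP e; have : y = - x by apply/eqP; rewrite -subr_eq0 opprK addrC e.
  by move=> ey; move: lt; rewrite ey vN ltxx.
split => //; apply/eqP; rewrite eq_le; apply/andP; split; last first.
  by apply: le_trans (vD x0 y0 s0); rewrite le_min lexx ltW.
have yx : x = (x + y) + (- y) by rewrite addrK.
have ny0 : - y != 0 by rewrite oppr_eq0.
have s1 : x + y + - y != 0 by rewrite addrK.
have := vD s0 ny0 s1; rewrite -yx vN => H.
move: H; rewrite ge_min => /orP [//|H]; by move: (lt_le_trans lt H); rewrite ltxx.
Qed.

Lemma Rbar_v x : x != 0 -> (Rbar iota x <-> 0 <= v x).
Proof. by case: Hv => _ _ _ H; apply: H. Qed.

Lemma iota_neq0 r : r != 0 -> iota r != 0.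
Proof. by move=> r0; apply/negP => /eqP e; move: r0; rewrite -(rmorph0 iota) in e; rewrite (Hinj e) eqxx. Qed.

Lemma v_val r : r != 0 -> exists j, v (iota r) = (a j)%:Z.
Proof. by case: Ha => _ _ H; apply: H. Qed.

Lemma val_ex j : exists r, r != 0 /\ v (iota r) = (a j)%:Z.
Proof. by case: Ha => _ H _; apply: H. Qed.

Lemma v_iota_ge0 r : r != 0 -> 0 <= v (iota r).
Proof. by move=> /v_val [j ->]. Qed.

Lemma a_inc j : (a j < a j.+1)%N.
Proof. by case: Ha. Qed.

Lemma a_lt j k : (j < k)%N -> (a j < a k)%N.
Proof.
elim: k => // k IH; rewrite ltnS leq_eqVlt => /orP [/eqP ->|/IH h]; first exact: a_inc.
exact: ltn_trans h (a_inc k).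
Qed.

Lemma a_le j k : (j <= k)%N -> (a j <= a k)%N.
Proof. by rewrite leq_eqVlt => /orP [/eqP ->//|/a_lt/ltnW]. Qed.

Lemma a_lt_inv j k : (a j < a k)%N -> (j < k)%N.
Proof. by move=> h; rewrite ltnNge; apply/negP => /a_le; rewrite leqNgt h. Qed.

Lemma a_ge j : (j <= a j)%N.
Proof. elim: j => // j IH; exact: leq_ltn_trans IH (a_inc j). Qed.

Lemma value_step r j : r != 0 -> (a j)%:Z < v (iota r) -> (a j.+1)%:Z <= v (iota r).
Proof.
move=> r0; have [m ->] := v_val r0; rewrite !ltz_nat lez_nat => h.
by apply: a_le; apply: a_lt_inv.
Qed.



Lemma nonunit_v z : Rbar_nonunit iota z -> z != 0 -> 1 <= v z.
Proof.
move=> [Rz [/eqP e|nR]] z0; first by rewrite e in z0.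
have := proj1 (Rbar_v z0) Rz; rewrite le_eqVlt => /orP [/eqP e|//].
exfalso; apply: nR; apply/(Rbar_v (invr_neq0 z0)); by rewrite vV // -e oppr0.
Qed.

Lemma approx x h : x != 0 -> h != 0 -> v x = v (iota h) ->
  exists r, x - iota h * iota r = 0 \/ (x - iota h * iota r != 0 /\ v x < v (x - iota h * iota r)).
Proof.
move=> x0 h0 e; have ih0 := iota_neq0 h0.
set u := x / iota h.
have u0 : u != 0 by rewrite mulf_neq0 ?invr_neq0.
have vu : v u = 0 by rewrite /u vM ?invr_neq0 // vV // e; lia.
have Ru : Rbar iota u by apply/(Rbar_v u0); rewrite vu.
have [r Hr] := (proj2 Hres) u Ru.
exists r.
have ex : x - iota h * iota r = iota h * (u - iota r).
  by rewrite mulrBr /u mulrCA mulfV // mulr1.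
have [e0|n0] := eqVneq (u - iota r) 0; first by left; rewrite ex e0 mulr0.
right; rewrite ex mulf_neq0 //; split => //.
rewrite vM // -e; exact: ltz_add1 (nonunit_v Hr n0).
Qed.

Definition I j := Ival iota v a j.

Lemma I0 j : I j 0. Proof. by left. Qed.

Lemma I_le j k : (j <= k)%N -> forall x, I k x -> I j x.
Proof.
move=> jk x [->|h]; [by left|right]; apply: le_trans h; rewrite lez_nat; exact: a_le.
Qed.

Lemma I_nz j x : x != 0 -> I j x -> (a j)%:Z <= v (iota x).
Proof. by move=> x0 [e|//]; rewrite e eqxx in x0. Qed.

Lemma I_add j x y : I j x -> I j y -> I j (x + y).
Proof.
have [->|x0] := eqVneq x 0; first by rewrite add0r.
have [->|y0] := eqVneq y 0; first by rewrite addr0.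
move=> /(I_nz x0) hx /(I_nz y0) hy.
have [->|s0] := eqVneq (x + y) 0; first by left.
right; rewrite rmorphD; apply: vD_ge => //; rewrite ?iota_neq0 // -rmorphD iota_neq0 //.
Qed.

Lemma I_mul j b x : I j x -> I j (b * x).
Proof.
have [->|b0] := eqVneq b 0; first by rewrite mul0r => _; left.
have [->|x0] := eqVneq x 0; first by rewrite mulr0.
move=> /(I_nz x0) hx; right; rewrite rmorphM vM ?iota_neq0 //.
by apply: le_trans hx _; rewrite lerDr v_iota_ge0.
Qed.

Lemma I_opp j x : I j x -> I j (- x).
Proof. by move=> h; rewrite -mulN1r; apply: I_mul. Qed.

Lemma I_ideal j : is_ideal (I j).
Proof. split; [exact: I0 | exact: I_add | exact: I_mul]. Qed.

Lemma I_step j x : x != 0 -> (a j)%:Z < v (iota x) -> I j.+1 x.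
Proof. by move=> x0 h; right; apply: value_step. Qed.

Lemma decomp j x h : I j x -> h != 0 -> v (iota h) = (a j)%:Z ->
  exists r x1, x = r * h + x1 /\ I j.+1 x1.
Proof.
move=> Ix h0 vh.
have [->|x0] := eqVneq x 0; first by exists 0, 0; rewrite mul0r addr0; split => //; left.
have := I_nz x0 Ix; rewrite le_eqVlt => /orP [/eqP e|lt]; last first.
  by exists 0, x; rewrite mul0r add0r; split => //; apply: I_step.
have vxh : v (iota x) = v (iota h) by rewrite vh e.
have [r [E|[ne lt]]] := approx (iota_neq0 x0) h0 vxh.
  exists r, 0; rewrite addr0; split; last by left.
  by apply: Hinj; move/eqP: E; rewrite subr_eq0 rmorphM mulrC => /eqP.
exists r, (x - r * h); split; first by rewrite addrC subrK.
have x10 : x - r * h != 0.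
  by apply/negP => /eqP E; move: ne; rewrite -rmorphM -rmorphB mulrC E rmorph0 eqxx.
apply: I_step => //.
by rewrite e rmorphB rmorphM [iota r * _]mulrC.
Qed.

Lemma DI (Q P : K -> Prop) (N : int) : P 0 ->
  (forall z, Q z -> z != 0 -> N <= v z -> P z) ->
  (forall z, Q z -> z != 0 -> exists z', (z' = 0 \/ (Q z' /\ z' != 0 /\ v z < v z')) /\ (P z' -> P z)) ->
  forall z, Q z -> z != 0 -> P z.
Proof.
move=> P0 base step.
suff H : forall k : nat, forall z, Q z -> z != 0 -> N - k%:Z <= v z -> P z.
  move=> z Qz z0; apply: (H `|N - v z|%N z Qz z0); lia.
elim => [|k IH] z Qz z0 hk.
  by apply: base => //; move: hk; rewrite subr0.
have [hN|hN] := lerP N (v z); first exact: base.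
have [z' [[E|[Qz' [z0' lt]]] imp]] := step z Qz z0; apply: imp; first by rewrite E.
apply: IH => //; lia.
Qed.

Lemma tpow (z : int) : exists y, y != 0 /\ v y = z.
Proof.
case: Hv => _ _ [t [t0 vt]] _.
have Hk : forall k : nat, t ^+ k != 0 /\ v (t ^+ k) = k%:Z.
  elim => [|k [nz IH]]; first by rewrite expr0 oner_neq0 v1.
  rewrite exprS mulf_neq0 // vM // vt IH; split => //; lia.
case: z => k; first by exists (t ^+ k); exact: Hk.
have [nz vk] := Hk k.+1; exists (t ^+ k.+1)^-1; rewrite invr_neq0 // vV // vk.
by split => //; rewrite NegzE.
Qed.

Lemma den_seq (s : seq K) : exists d, d != 0 /\ forall i, (i < size s)%N -> exists r, iota d * s`_i = iota r.
Proof.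
elim: s => [|x s [d [d0 Hd]]]; first by exists 1; split; [exact: oner_neq0|].
have [a0 [b [b0 ->]]] := (proj2 Hfrac) x.
exists (b * d); split; first by rewrite mulf_neq0.
case => [_|i]; rewrite /=.
  exists (d * a0); rewrite !rmorphM; have := iota_neq0 b0; move: (iota b) => ib ib0.
  by field.
rewrite ltnS => /Hd [r Hr]; exists (b * r); by rewrite !rmorphM -mulrA Hr.
Qed.

Lemma cond_big : exists N : int, forall y, y != 0 -> N <= v y -> exists r, y = iota r.
Proof.
have [s [Hs Hx]] := Hfin.
have [d [d0 Hd]] := den_seq s.
have id0 := iota_neq0 d0.
exists (v (iota d)) => y y0 hy.
set u := y / iota d.
have u0 : u != 0 by rewrite mulf_neq0 ?invr_neq0.
have Ru : Rbar iota u by apply/(Rbar_v u0); rewrite /u vM ?invr_neq0 // vV //; lia.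
have [c Hc] := Hx u Ru.
have -> : y = iota d * u by rewrite /u mulrCA mulfV // mulr1.
rewrite Hc mulr_sumr.
apply: (big_ind (fun z => exists r, z = iota r)).
- by exists 0; rewrite rmorph0.
- by move=> z1 z2 [r1 ->] [r2 ->]; exists (r1 + r2); rewrite rmorphD.
- move=> i _; have [r Hr] := Hd i (ltn_ord i).
  by exists (c i * r); rewrite mulrCA Hr rmorphM.
Qed.

Lemma conductor y : y != 0 -> (a n)%:Z <= v y -> exists r, y = iota r.
Proof.
have [N HN] := cond_big.
move=> y0 hy; apply: (@DI (fun z => (a n)%:Z <= v z) (fun z => exists r, z = iota r) N) => //.
- by exists 0; rewrite rmorph0.
- by move=> z Qz z0 hz; apply: HN.
move=> z Qz z0.
have [j hj] : exists j : nat, v z = (a n + j)%N%:Z by exists `|v z - (a n)%:Z|%N; lia.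
have [h [h0 vh]] := val_ex (n + j).
rewrite (proj1 Hn) in vh.
have vzh : v z = v (iota h) by rewrite vh hj.
have [r [E|[ne lt]]] := approx z0 h0 vzh.
  exists 0; split; first by left.
  by move=> _; exists (h * r); apply/eqP; rewrite rmorphM -subr_eq0 E.
exists (z - iota h * iota r); split; first by right; split; [exact: le_trans Qz (ltW lt)|split].
by move=> [r1 Hr1]; exists (r1 + h * r); rewrite rmorphD -Hr1 rmorphM subrK.
Qed.

Lemma no_pred m : (a m).+1 = a n -> False.
Proof.
move=> E.
have mn : (m < n)%N by apply: a_lt_inv; rewrite -E.
have n1 : n = n.-1.+1 by lia.
have h1 : (a m <= a n.-1)%N by apply: a_le; lia.
have h2 : (a n.-1 < a n)%N by rewrite {2}n1; exact: a_inc.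
have E2 : (a n.-1).+1 = a n by lia.
have := (proj2 Hn) n.-1; have : (n <= n.-1)%N -> False by lia.
move=> F H; apply: F; apply: H => j.
case: j => [|j]; first by rewrite !addn0.
have -> : (n.-1 + j.+1 = n + j)%N by lia.
rewrite (proj1 Hn) -E2; lia.
Qed.

Lemma Rc_nonneg (J : R -> Prop) c :
  (forall r, r != 0 -> (a n)%:Z <= v (iota r) -> J r) -> c != 0 ->
  (forall y, J y -> exists r, iota r = c * iota y) -> 0 <= v c.
Proof.
move=> HJ c0 Hc; rewrite leNgt; apply/negP => vc.
have [y [y0 vy]] := tpow ((a n)%:Z - 1 - v c).
have [r0 er0] := conductor y0 (ltac:(rewrite vy; lia)).
have r00 : r0 != 0 by apply/negP => /eqP e; move: y0; rewrite er0 e rmorph0 eqxx.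
have [r' Hr'] := Hc r0 (HJ r0 r00 (ltac:(rewrite -er0 vy; lia))).
have r'0 : r' != 0.
  by apply/negP => /eqP e; move: Hr'; rewrite e rmorph0 -er0 => /esym/eqP; rewrite mulf_eq0 (negbTE c0) (negbTE y0).
have [m hm] := v_val r'0.
move: hm; rewrite Hr' -er0 vM // vy => hm.
apply: (no_pred (m := m)); lia.
Qed.

Definition KTC (J : R -> Prop) := forall c, c != 0 ->
  (forall y, J y -> exists r, iota r = c * iota y) -> forall y r, J y -> iota r = c * iota y -> J r.

Lemma in_TR_K (J : R -> Prop) q0 : is_ideal J -> J q0 -> q0 != 0 -> KTC J -> in_TR J.
Proof.
move=> HJ Jq0 q00 TC; split; last by exists q0.
apply: (trace_of_ideal HJ Jq0 q00) => b Hb y r Jy E.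
have iq0 := iota_neq0 q00.
have [b0e|b0] := eqVneq b 0.
  move: E; rewrite b0e mul0r => /eqP; rewrite mulf_eq0 (negbTE q00) /= => /eqP ->.
  by case: HJ.
apply: (TC (iota b / iota q0)) (Jy) _.
- by rewrite mulf_neq0 ?invr_neq0 ?iota_neq0.
- move=> y' Jy'; have [r' Hr'] := Hb y' Jy'; exists r'.
  apply: (mulfI iq0); rewrite -rmorphM Hr' rmorphM; move: (iota b) (iota y') iq0 => B Y Q0.
  by field.
- apply: (mulfI iq0); rewrite -rmorphM E rmorphM; move: (iota b) (iota y) iq0 => B Y Q0.
  by field.
Qed.

Lemma I_contains_cond j : (j <= n)%N -> forall r, r != 0 -> (a n)%:Z <= v (iota r) -> I j r.
Proof. by move=> jn r r0 h; right; apply: le_trans h; rewrite lez_nat; exact: a_le. Qed.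

Lemma I_KTC j : (j <= n)%N -> KTC (I j).
Proof.
move=> jn c c0 Hc y r Iy E.
have vc := Rc_nonneg (I_contains_cond jn) c0 Hc.
have [->|r0] := eqVneq r 0; first exact: I0.
have y0 : y != 0 by apply/negP => /eqP e; move: E; rewrite e rmorph0 mulr0 => /eqP; rewrite -(rmorph0 iota) (inj_eq Hinj) (negbTE r0).
right; rewrite E vM ?iota_neq0 //.
by apply: le_trans (I_nz y0 Iy) _; rewrite lerDr.
Qed.

Lemma I_inTR j : (j <= n)%N -> in_TR (I j).
Proof.
move=> jn; have [q [q0 vq]] := val_ex j.
apply: (in_TR_K (q0 := q)) => //; [exact: I_ideal | by right; rewrite vq | exact: I_KTC].
Qed.

Lemma prod_in j k x y : I j x -> I k y -> ideal_mul (I j) (I k) (x * y).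
Proof.
move=> Ix Iy; exists 1%N, (fun _ => x), (fun _ => y); split => //; split => //.
by rewrite big_ord1.
Qed.

Lemma same_from q j k : I j q ->
  (forall x y, I j x -> I k y -> exists z, I k z /\ x * y = q * z) ->
  same_ideal (ideal_mul (I j) (I k)) (scale_ideal q (I k)).
Proof.
move=> Iq H x; split.
  move=> [m [f [g [Hf [Hg ->]]]]].
  apply: (big_ind (scale_ideal q (I k))).
  - by exists 0; split; [exact: I0 | rewrite mulr0].
  - by move=> z1 z2 [y1 [I1 ->]] [y2 [I2 ->]]; exists (y1 + y2); split; [exact: I_add | rewrite mulrDr].
  - by move=> i _; have [z [Iz E]] := H _ _ (Hf i) (Hg i); exists z.
move=> [y [Iy ->]]; exact: prod_in.
Qed.

Lemma LemmaX i g : g != 0 -> v (iota g) = (a i)%:Z ->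
  ~ same_ideal (ideal_mul (I i) (I i.+2)) (scale_ideal g (I i.+2)) ->
  (forall x2 z p, I i.+1 x2 -> I i.+3 z -> p != 0 -> v (iota p) = (a i.+1)%:Z ->
      exists w, I i.+3 w /\ x2 * z = p * w) ->
  forall m, m != 0 -> 1 <= v m -> (forall y, I i.+2 y -> exists r, iota r = m * iota y) ->
  forall p, iota p = m * iota g -> v (iota p) != (a i.+1)%:Z.
Proof.
move=> g0 vg cond Hnext m m0 vm Hm p Ep; apply/negP => /eqP vp.
have ig0 := iota_neq0 g0.
have p0 : p != 0 by apply/negP => /eqP e; move: Ep; rewrite e rmorph0 => /esym/eqP; rewrite mulf_eq0 (negbTE m0) (negbTE ig0).
apply: cond; apply: same_from; first by right; rewrite vg.
move=> x y Ix Iy.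
have [r [x1 [Ex Ix1]]] := decomp Ix g0 vg.
have [s [x2 [Ex1 Ix2]]] := decomp Ix1 p0 vp.
have [my Emy] := Hm y Iy.
have Imy : I i.+3 my.
  have [->|my0] := eqVneq my 0; first exact: I0.
  have y0 : y != 0 by apply/negP => /eqP e; move: Emy; rewrite e rmorph0 mulr0 => /eqP; rewrite -(rmorph0 iota) (inj_eq Hinj) (negbTE my0).
  apply: I_step => //; rewrite Emy vM ?iota_neq0 //.
  rewrite addrC; exact: lt_le_trans (ltz_add1 _ vm) (lerD (I_nz y0 Iy) (lexx _)).
have [w [Iw Ew]] := Hnext x2 my p (I_le (leqnSn _) Ix2) Imy p0 vp.
have Epy : p * y = g * my.
  by apply: Hinj; rewrite !rmorphM Ep Emy; ring.
have Ex2y : x2 * y = g * w.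
  apply: Hinj; apply: (mulfI m0); have E := congr1 iota Ew; rewrite !rmorphM Emy Ep in E.
  by rewrite !rmorphM mulrCA E; ring.
exists (r * y + s * my + w); split.
  apply: I_add; first apply: I_add; first exact: I_mul.
  - exact: I_mul (I_le (leqnSn i.+2) Imy).
  - exact: (I_le (leqnSn i.+2)).

apply/eqP; rewrite -subr_eq0.
have -> : x * y - g * (r * y + s * my + w) = s * (p * y - g * my) + (x2 * y - g * w).
  by rewrite Ex Ex1; ring.
by rewrite Epy Ex2y !subrr mulr0 addr0.
Qed.

Lemma Indep i q g al p0 : (i.+2 <= n)%N -> q != 0 -> v (iota q) = (a i)%:Z ->
  g != 0 -> v (iota g) = (a i)%:Z -> g = q + al * p0 -> I i.+1 p0 ->
  same_ideal (ideal_mul (I i) (I i.+2)) (scale_ideal g (I i.+2)) ->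
  same_ideal (ideal_mul (I i) (I i.+2)) (scale_ideal q (I i.+2)).
Proof.
move=> in2 q0 vq g0 vg Eg Ip0 H.
have iq0 := iota_neq0 q0.
suff key : forall r, ideal_mul (I i) (I i.+2) r -> scale_ideal q (I i.+2) r.
  apply: same_from; first by right; rewrite vq.
  move=> x y Ix Iy; have [z [Iz E]] := key _ (prod_in Ix Iy); by exists z.
move=> r Xr.
have [->|r0] := eqVneq r 0; first by exists 0; split; [exact: I0|rewrite mulr0].
have := @DI (fun z => exists r, z = iota r /\ ideal_mul (I i) (I i.+2) r)
            (fun z => exists r, z = iota r /\ scale_ideal q (I i.+2) r) ((a i)%:Z + (a n)%:Z).
move=> /(_ _ _ _ (iota r) _ (iota_neq0 r0)) [].
- by exists 0; rewrite rmorph0; split => //; exists 0; split; [exact: I0|rewrite mulr0].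
- move=> z [r1 [-> X1]] z0 hz.
  set u := iota r1 / iota q.
  have u0 : u != 0 by rewrite mulf_neq0 ?invr_neq0.
  have [w Ew] := conductor u0 (ltac:(rewrite /u vM ?invr_neq0 // vV // vq; lia)).
  exists r1; split => //; exists w; split.
    have w0 : w != 0 by apply/negP => /eqP e; move: u0; rewrite Ew e rmorph0 eqxx.
    apply: I_contains_cond => //; rewrite -Ew /u vM ?invr_neq0 // vV // vq; lia.
  by apply: Hinj; rewrite rmorphM -Ew /u mulrCA mulfV // mulr1.
- move=> z [r1 [-> X1]] z0.
  have [y [Iy Er1]] := (H r1).1 X1.
  exists (iota (al * (p0 * y))); split.
    have [e0|ne0] := eqVneq (al * (p0 * y)) 0; first by left; rewrite e0 rmorph0.
    right; split.
      exists (al * (p0 * y)); split => //; rewrite mulrA; apply: prod_in => //.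
      by apply: I_mul; apply: (I_le (leqnSn i)).
    split; first exact: iota_neq0.
    move: ne0; rewrite !mulf_eq0 !negb_or => /andP [al0 /andP [p00 y0]].
    rewrite Er1 !rmorphM !vM ?mulf_neq0 ?iota_neq0 //; rewrite vg.
    have h1 := v_iota_ge0 al0; have h2 := I_nz p00 Ip0; have h3 := a_inc i.
    have h4 : (a i)%:Z < (a i.+1)%:Z by rewrite ltz_nat.
    lia.
  move=> [r2 [Er2 [w [Iw Ew]]]].
  exists r1; split => //; exists (y + w); split; first exact: I_add.
  have E2 : r2 = al * (p0 * y) by apply: Hinj.
  by rewrite Er1 Eg mulrDr -Ew E2; ring.
- by exists r.
by move=> r' [/Hinj -> ?].
Qed.

Definition Jg i g (x : R) := exists s y, I i.+2 y /\ x = s * g + y.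

Lemma Jg_ideal i g : is_ideal (Jg i g).
Proof.
split.
- by exists 0, 0; split; [exact: I0 | rewrite mul0r addr0].
- move=> x y [s1 [y1 [I1 ->]]] [s2 [y2 [I2 ->]]]; exists (s1 + s2), (y1 + y2); split; first exact: I_add.
  by rewrite mulrDl addrACA.
- move=> b x [s [y [Iy ->]]]; exists (b * s), (b * y); split; first exact: I_mul.
  by rewrite mulrDr mulrA.
Qed.

Lemma Jg_g i g : Jg i g g.
Proof. by exists 1, 0; split; [exact: I0 | rewrite mul1r addr0]. Qed.

Lemma Jg_I i g x : I i.+2 x -> Jg i g x.
Proof. by exists 0, x; split => //; rewrite mul0r add0r. Qed.

Section JSec.
Variables (i : nat) (g : R).
Hypothesis in2 : (i.+2 <= n)%N.
Hypothesis g0 : g != 0.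
Hypothesis vg : v (iota g) = (a i)%:Z.
Hypothesis cond : ~ same_ideal (ideal_mul (I i) (I i.+2)) (scale_ideal g (I i.+2)).
Hypothesis Hnext : forall x2 z p, I i.+1 x2 -> I i.+3 z -> p != 0 -> v (iota p) = (a i.+1)%:Z ->
      exists w, I i.+3 w /\ x2 * z = p * w.

Lemma Jg_KTC : KTC (Jg i g).
Proof.
move=> c c0 Hc y r Jy E.
have HJ : forall r, r != 0 -> (a n)%:Z <= v (iota r) -> Jg i g r.
  by move=> r1 r10 h; apply: Jg_I; apply: I_contains_cond.
have vc := Rc_nonneg HJ c0 Hc.
have ig0 := iota_neq0 g0.
have Hc2 : forall y, I i.+2 y -> exists r, I i.+2 r /\ iota r = c * iota y.
  move=> y1 Iy1; have [r1 Er1] := Hc y1 (Jg_I g Iy1); exists r1; split => //.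
  have [->|r10] := eqVneq r1 0; first exact: I0.
  have y10 : y1 != 0 by apply/negP => /eqP e; move: Er1; rewrite e rmorph0 mulr0 => /eqP; rewrite -(rmorph0 iota) (inj_eq Hinj) (negbTE r10).
  right; rewrite Er1 vM ?iota_neq0 //; apply: le_trans (I_nz y10 Iy1) _; by rewrite lerDr.
have [r2 Er2] := Hc g (Jg_g i g).
have Jr2 : Jg i g r2.
  have Rc : Rbar iota c by apply/(Rbar_v c0).
  have [r0 Hr0] := (proj2 Hres) c Rc.
  have [m0|mn0] := eqVneq (c - iota r0) 0.
    have ec : c = iota r0 by apply/eqP; rewrite -subr_eq0 m0.
    have -> : r2 = r0 * g by apply: Hinj; rewrite rmorphM Er2 ec.
    by case: (Jg_ideal i g) => _ _ JM; apply: JM; exact: Jg_g.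
  have vm := nonunit_v Hr0 mn0.
  have Hm : forall y, I i.+2 y -> exists r, iota r = (c - iota r0) * iota y.
    move=> y1 Iy1; have [r1 [_ Er1]] := Hc2 y1 Iy1; exists (r1 - r0 * y1).
    by rewrite rmorphB rmorphM Er1 mulrBl.
  have Ep : iota (r2 - r0 * g) = (c - iota r0) * iota g by rewrite rmorphB rmorphM Er2 mulrBl.
  have NX := LemmaX g0 vg cond Hnext mn0 vm Hm Ep.
  have -> : r2 = r0 * g + (r2 - r0 * g) by rewrite addrC subrK.
  exists r0, (r2 - r0 * g); split => //.
  have [->|d0] := eqVneq (r2 - r0 * g) 0; first exact: I0.
  have h1 : (a i)%:Z < v (iota (r2 - r0 * g)).
    rewrite Ep vM // vg addrC; exact: ltz_add1.
  have h2 := value_step d0 h1.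
  apply: I_step => //; rewrite lt_def NX h2; by [].
have [s [y' [Iy' Ey]]] := Jy.
have [r1 [Ir1 Er1]] := Hc2 y' Iy'.
have -> : r = s * r2 + r1.
  by apply: Hinj; rewrite E Ey !rmorphD !rmorphM Er2 Er1; ring.
case: (Jg_ideal i g) => _ JD JM; apply: JD; first exact: JM.
exact: Jg_I.
Qed.

Lemma p0_notin p0 : p0 != 0 -> v (iota p0) = (a i.+1)%:Z -> ~ Jg i g p0.
Proof.
move=> p00 vp [s [y [Iy Ep]]].
have ig0 := iota_neq0 g0.
have hlt : (a i.+1)%:Z < (a i.+2)%:Z by rewrite ltz_nat a_inc.
have s0 : s != 0.
  apply/negP => /eqP e; move: Ep; rewrite e mul0r add0r => ey.
  by rewrite -ey in Iy; move: (I_nz p00 Iy); rewrite vp leNgt hlt.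
have Esg : iota (s * g) = iota p0 + (- iota y) by rewrite Ep rmorphD addrK.
have [_ vsg] := v_strict (iota_neq0 p00) (y := - iota y) (ltac:(
  have [->|y0] := eqVneq y 0; [left; by rewrite rmorph0 oppr0 |
  right; split; [by rewrite oppr_eq0 iota_neq0 | rewrite vN vp; exact: lt_le_trans hlt (I_nz y0 Iy)]])).
have vs : 1 <= v (iota s).
  move: vsg; rewrite -Esg rmorphM vM ?iota_neq0 // vg vp => h.
  have : (a i < a i.+1)%N := a_inc i. lia.
have Hm : forall y, I i.+2 y -> exists r, iota r = iota s * iota y.
  by move=> y1 _; exists (s * y1); rewrite rmorphM.
have := LemmaX g0 vg cond Hnext (iota_neq0 s0) vs Hm (p := s * g).
by rewrite rmorphM => /(_ erefl); rewrite -rmorphM Esg vsg vp eqxx.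
Qed.

End JSec.

Lemma main_result :
  (exists i, [/\ (1 <= i)%N, (i <= n - 3)%N &
     exists q : R, q != 0 /\ v (iota q) = (a i)%:Z /\
       ~ same_ideal (ideal_mul (I i) (I i.+2)) (scale_ideal q (I i.+2))]) ->
  ((forall j, (j <= n)%N -> in_TR (I j)) /\
   (exists T, in_TR T /\ forall j, (j <= n)%N -> ~ same_ideal T (I j))) /\
  (infinite_residue_field R ->
   forall (k : nat) (L : 'I_k -> R -> Prop),
     exists T, in_TR T /\ forall l, ~ same_ideal T (L l)).
Proof.
move=> [i0 Pi0].
have [i [[i1 in3 [q [q0 [vq cq]]]] Hmax]] := max_nat (N := n) Pi0 (fun i '(And3 _ h _) => leq_trans h (leq_subr _ _)).
have in2 : (i.+2 <= n)%N by lia.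
have Hnext : forall x2 z p, I i.+1 x2 -> I i.+3 z -> p != 0 -> v (iota p) = (a i.+1)%:Z ->
      exists w, I i.+3 w /\ x2 * z = p * w.
  move=> x2 z p Ix2 Iz p0 vp.
  have [le|gt] := leqP i.+1 (n - 3).
    have S : same_ideal (ideal_mul (I i.+1) (I i.+3)) (scale_ideal p (I i.+3)).
      apply: contrapT => NS; apply: (Hmax i.+1 (ltnSn i)); split => //.
      by exists p.
    have [w [Iw Ew]] := (S (x2 * z)).1 (prod_in Ix2 Iz); by exists w.
  have ei : i.+3 = n by lia.
  have [->|xz0] := eqVneq (x2 * z) 0; first by exists 0; rewrite mulr0; split => //; exact: I0.
  move: xz0; rewrite mulf_eq0 negb_or => /andP [x20 z0].
  set u := iota (x2 * z) / iota p.
  have ip0 := iota_neq0 p0.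
  have u0 : u != 0 by rewrite mulf_neq0 ?invr_neq0 ?iota_neq0 ?mulf_neq0.
  have h1 := I_nz x20 Ix2; have h2 := I_nz z0 Iz; rewrite ei in h2.
  have vu : (a n)%:Z <= v u.
    rewrite /u vM ?invr_neq0 ?iota_neq0 ?mulf_neq0 //; rewrite vV // rmorphM vM ?iota_neq0 //; rewrite vp.
    lia.
  have [w Ew] := conductor u0 vu.
  have w0 : w != 0 by apply/negP => /eqP e; move: u0; rewrite Ew e rmorph0 eqxx.
  exists w; split.
    by rewrite ei; apply: I_contains_cond => //; move: vu; rewrite Ew.
  by apply: Hinj; rewrite [iota (p * w)]rmorphM -Ew /u mulrCA mulfV // mulr1.
have [p0 [p00 vp0]] := val_ex i.+1.
have Ip0 : I i.+1 p0 by right; rewrite vp0.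
pose ga al := q + al * p0.
have gaP : forall al, ga al != 0 /\ v (iota (ga al)) = (a i)%:Z.
  move=> al; have hlt : (a i)%:Z < (a i.+1)%:Z by rewrite ltz_nat a_inc.
  have [s0 vs] := v_strict (iota_neq0 q0) (y := iota (al * p0)) (ltac:(
    have [->|ap0] := eqVneq (al * p0) 0; [left; by rewrite rmorph0 |
    right; split; [exact: iota_neq0 | rewrite vq; exact: lt_le_trans hlt (I_nz ap0 (I_mul al Ip0))]])).
  rewrite /ga rmorphD vs vq; split => //.
  by apply/negP => /eqP e; move: s0; rewrite -rmorphD e rmorph0 eqxx.
have condP : forall al, ~ same_ideal (ideal_mul (I i) (I i.+2)) (scale_ideal (ga al) (I i.+2)).
  move=> al S; apply: cq; have [g0 vg] := gaP al.
  exact: (Indep in2 q0 vq g0 vg (erefl _) Ip0 S).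
have TR : forall al, in_TR (Jg i (ga al)).
  move=> al; have [g0 vg] := gaP al.
  apply: (in_TR_K (q0 := ga al)) => //; [exact: Jg_ideal | exact: Jg_g |].
  exact: Jg_KTC.
have NI : forall al, ~ Jg i (ga al) p0.
  move=> al; have [g0 vg] := gaP al; exact: p0_notin.
split.
  split; first exact: I_inTR.
  have ga0 : ga 0 = q by rewrite /ga mul0r addr0.
  exists (Jg i (ga 0)); split; first exact: TR.
  move=> j jn S.
  have Iq : I j q by apply/(S q); have := Jg_g i (ga 0); rewrite {2}ga0.
  have h := I_nz q0 Iq; rewrite vq lez_nat in h.
  apply: (NI 0); apply/(S p0); right; rewrite vp0 lez_nat.
  exact: leq_trans h (ltnW (a_inc i)).
move=> Hinf k L.
have dist : forall al be, same_ideal (Jg i (ga al)) (Jg i (ga be)) -> (al - be) \is a GRing.unit -> False.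
  move=> al be S u.
  have J1 := Jg_g i (ga al).
  have J2 : Jg i (ga al) (ga be) by apply/(S _); exact: Jg_g.
  case: (Jg_ideal i (ga al)) => _ JD JM.
  have J3 : Jg i (ga al) ((al - be) * p0).
    have -> : (al - be) * p0 = ga al + (-1) * ga be by rewrite /ga; ring.
    by apply: JD => //; apply: JM.
  apply: (NI al); rewrite -(mulKr u p0); exact: JM.
pose f := fun l : 'I_k => match pselect (exists al, same_ideal (Jg i (ga al)) (L l)) with
  | left h => projT1 (cid h) | right _ => 0 end.
have fP : forall l, (exists al, same_ideal (Jg i (ga al)) (L l)) -> same_ideal (Jg i (ga (f l))) (L l).
  move=> l h; rewrite /f; case: pselect => // h'; exact: (projT2 (cid h')).
have [r Hr] := Hinf [seq f l | l <- enum 'I_k].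
exists (Jg i (ga r)); split; first exact: TR.
move=> l S.
have S2 := fP l (ex_intro _ r S).
apply: (dist r (f l)).
  by move=> x; split => [/(S x).1 /(S2 x).2 | /(S2 x).1 /(S x).2].
have := Hr (f l) (map_f _ (mem_enum _ l)).
by rewrite /nonunits; case: (_ \is a GRing.unit) => // H; exfalso; apply: H.
Qed.

End Main.

Unset Implicit Arguments.

Theorem corollary3p7 (R : idomainType) (K : fieldType)
  (iota : {rmorphism R -> K}) (v : K -> int) (a : nat -> nat) (n : nat) :
  is_fraction_field iota ->
  is_local R -> is_noetherian R -> krull_dim_one R ->
  Rbar_finite iota -> Rbar_local iota ->
  residue_iso iota ->
  normalized_valuation_of_Rbar iota v ->
  enumerates_value_semigroup iota v a ->
  conductor_index a n ->
  (4 <= n)%N ->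
  (exists i, [/\ (1 <= i)%N, (i <= n - 3)%N &
     exists q : R, q != 0 /\ v (iota q) = (a i)%:Z /\
       ~ same_ideal (ideal_mul (Ival iota v a i) (Ival iota v a i.+2))
                    (scale_ideal q (Ival iota v a i.+2))]) ->
  (* (1) I(R) is strictly contained in T(R) *)
  ((forall j, (j <= n)%N -> in_TR (Ival iota v a j)) /\
   (exists T, in_TR T /\ forall j, (j <= n)%N -> ~ same_ideal T (Ival iota v a j))) /\
  (* (2) if k is infinite then T(R) is infinite *)
  (infinite_residue_field R ->
   forall (k : nat) (L : 'I_k -> R -> Prop),
     exists T, in_TR T /\ forall l, ~ same_ideal T (L l)).
Proof.
move=> Hfrac _ _ _ Hfin _ Hres Hv Ha Hn Hn4.
exact: (main_result (proj1 Hfrac) Hv Ha Hn Hn4 Hres Hfin Hfrac).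
Qed.
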